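(* Let $X=\mathbb Z$, $m\equiv1$, $b(x,y)=1$ if $|x-y|=1$ and $b(x,y)=0$ otherwise, and $D=2\mathbb Z$. Then for every $T>0$, $r\in[1,\infty]$ and $K\ge0$ the linear control problem $(H,D)$ is not $(0,T,r,K)$-controllable.
   Context: $H$ is the weighted Laplacian on $\ell_2(X,m)$, $Hf(x)=\frac1{m(x)}\sum_yb(x,y)(f(x)-f(y))$ (here $Hf(x)=2f(x)-f(x-1)-f(x+1)$), $S_t=e^{-tH}$. The control problem $(H,D)$ is $\dot f=-Hf+\mathbf 1_Du$, $f(0)=f_0\in\ell_2(X,m)$, where $\mathbf 1_D$ is extension by zero from $\ell_2(D,m|_D)$, with mild solution $f(t)=S_tf_0+\int_0^tS_{t-\tau}\mathbf 1_Du(\tau)d\tau$; it is $(\alpha,T,r,K)$-controllable if for every $f_0$ there is $u\in L_r((0,T);\ell_2(D,m|_D))$ with $\|u\|_{L_r((0,T);\ell_2(D,m|_D))}\le K\|f_0\|$ and $\|f(T)\|\le\alpha\|f_0\|$. *)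

(* Defs.v *)
From HB Require Import structures.
From mathcomp Require Import all_boot all_order all_algebra.
From mathcomp Require Import all_classical all_reals all_analysis.
Set Implicit Arguments. Unset Strict Implicit. Unset Printing Implicit Defensive.
Import Order.TTheory GRing.Theory Num.Theory.
Import numFieldNormedType.Exports.
Local Open Scope classical_set_scope.
Local Open Scope ring_scope.

Section Defs.
Variable R : realType.

(* X = Z, m = 1: squared l2-norm as an extended real (+oo if not in l2). *)
Definition l2sq (f : int -> R) : \bar R := \esum_(x in [set: int]) ((f x) ^+ 2)%:E.
Definition l2_in (f : int -> R) : Prop := (l2sq f < +oo)%E.
Definition l2norm (f : int -> R) : R := Num.sqrt (fine (l2sq f)).

(* b(x,y) = 1 iff |x-y| = 1; H f(x) = sum_y b(x,y)(f x - f y) = 2 f x - f(x-1) - f(x+1). *)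
Definition Hlap (f : int -> R) : int -> R :=
  fun x => (f x - f (x - 1)%R) + (f x - f (x + 1)%R).

(* S_t f = e^{-tH} f = sum_k (-t)^k/k! H^k f  (H bounded; coordinatewise). *)
Definition Ssemi (t : R) (f : int -> R) : int -> R :=
  fun x => limn (fun n : nat => \sum_(0 <= k < n) ((- t) ^+ k / (k`!)%:R * iter k Hlap f x)).

Definition I0T (T : R) : set R := `]0, T[%classic.

Definition inD (x : int) : bool := (2 %| x)%Z.
Definition extD (g : int -> R) : int -> R := fun x => if inD x then g x else 0.

Definition mild (T : R) (f0 : int -> R) (u : R -> int -> R) : int -> R :=
  fun x => Ssemi T f0 x +
    fine (\int[lebesgue_measure]_(tau in I0T T) (Ssemi (T - tau) (extD (u tau)) x)%:E)%E.

Definition unorm (T : R) (u : R -> int -> R) : R -> \bar R :=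
  fun tau => (if tau \in I0T T then l2norm (extD (u tau)) else 0)%:E.

Definition admissible (T : R) (r : \bar R) (K : R) (f0 : int -> R)
    (u : R -> int -> R) : Prop :=
  (forall x, measurable_fun (I0T T) (fun tau => u tau x)) /\
  (forall tau, I0T T tau -> l2_in (extD (u tau))) /\
  (Lnorm lebesgue_measure r (unorm T u) <= (K * l2norm f0)%:E)%E.

Definition controllable (alpha T : R) (r : \bar R) (K : R) : Prop :=
  forall f0 : int -> R, l2_in f0 ->
    exists u : R -> int -> R, admissible T r K f0 u /\
      l2_in (mild T f0 u) /\ l2norm (mild T f0 u) <= alpha * l2norm f0.

End Defs.

(* Main.v *)
Require Import Defs.
From HB Require Import structures.
From mathcomp Require Import all_boot all_order all_algebra.
From mathcomp Require Import all_classical all_reals all_analysis.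
From mathcomp Require Import measurable_realfun.
From mathcomp Require Import zify ring lra.
Import Order.TTheory GRing.Theory Num.Theory.
Import numFieldNormedType.Exports.
Local Open Scope ring_scope.

Section P1.
Variable R : realType.
Local Notation H := (@Hlap R).

Lemma iterS' k (w : int -> R) : iter k.+1 H w = H (iter k H w). Proof. by []. Qed.

Lemma Hbound (w : int -> R) B : (forall y, `|w y| <= B) ->
  forall k y, `|iter k H w y| <= 4 ^+ k * B.
Proof.
move=> hw; elim=> [|k IH] y; first by rewrite expr0 mul1r.
rewrite iterS' /Hlap exprS -mulrA.
have h1 := IH y; have h2 := IH (y - 1); have h3 := IH (y + 1).
set a := iter k H w in h1 h2 h3 *.
apply: (le_trans (ler_normD _ _)).
apply: (le_trans (lerD (ler_normB _ _) (ler_normB _ _))).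
lra.
Qed.

Definition Asum (M : nat) (w : int -> R) : R :=
  \sum_(k < M) (-1) ^+ k * w (Posz (k.*2.+1)).

Lemma AH M w : Asum M (H w) = 2 * Asum M w - w 0 + (-1) ^+ M * w (Posz (M.*2)).
Proof.
elim: M => [|M IH]; first by rewrite /Asum !big_ord0 expr0 mul1r /=; ring.
rewrite /Asum in IH *; rewrite big_ord_recr /= IH big_ord_recr /= /Hlap.
have e1 : (Posz (M.*2.+1) - 1)%R = Posz (M.*2) by lia.
have e2 : (Posz (M.*2.+1) + 1)%R = Posz (M.+1.*2) by lia.
rewrite e1 e2 exprS; ring.
Qed.

Lemma Aiter M w B : (forall y, `|w y| <= B) ->
  forall k, `|Asum M (iter k H w) - 2 ^+ k * Asum M w| <= 2 * 4 ^+ k * B.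
Proof.
move=> hw; have B0 : 0 <= B by exact: le_trans (normr_ge0 _) (hw 0).
elim=> [|k IH]; first by rewrite expr0 mul1r subrr normr0 mulr1 mulr_ge0.
rewrite iterS' AH.
have hb := Hbound w B hw k.
have h1 := hb 0; have h2 := hb (Posz M.*2).
set a := iter k H w in IH h1 h2 *.
set s := (-1) ^+ M.
have hs : `|s * a (Posz M.*2)| <= 4^+k * B.
  by rewrite normrM normrX normrN1 expr1n mul1r.
rewrite [2 ^+ k.+1]exprS [4 ^+ k.+1]exprS.
have -> : 2 * Asum M a - a 0 + s * a (Posz M.*2) - 2 * 2 ^+ k * Asum M w =
  2 * (Asum M a - 2 ^+ k * Asum M w) - a 0 + s * a (Posz M.*2) by ring.
apply: (le_trans (ler_normD _ _)).
apply: (le_trans (lerD (ler_normB _ _) (lexx _))).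
rewrite normrM normr_nat.
have h0 : 0 <= 4 ^+ k * B by rewrite mulr_ge0 // exprn_ge0.
lra.
Qed.

Definition term (t : R) (w : int -> R) (x : int) (k : nat) : R :=
  (- t) ^+ k / (k`!)%:R * iter k H w x.

Lemma SsemiE t w x : Ssemi t w x = limn (series (term t w x)).
Proof. by []. Qed.

Lemma exp_coeff_ge0 (y : R) k : 0 <= y -> 0 <= exp_coeff y k.
Proof. by move=> y0; rewrite /exp_coeff /= divr_ge0 // exprn_ge0. Qed.

Lemma term_bound t w B x k : (forall y, `|w y| <= B) ->
  `|term t w x k| <= B * exp_coeff (4 * `|t|) k.
Proof.
move=> hw; rewrite /term /exp_coeff /= normrM normf_div normrX normrN normr_nat.
have -> : B * ((4 * `|t|) ^+ k / (k`!)%:R) = (`|t| ^+ k / (k`!)%:R) * (4 ^+ k * B).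
  by rewrite exprMn; ring.
apply: ler_wpM2l; first by rewrite divr_ge0 // exprn_ge0.
exact: Hbound.
Qed.

Lemma cvg_expc (B y : R) : cvgn (series (fun k => B * exp_coeff y k)).
Proof. exact: (@is_cvg_seriesZ _ (exp_coeff y) B (is_cvg_series_exp_coeff y)). Qed.

Lemma lim_expc (B y : R) : limn (series (fun k => B * exp_coeff y k)) = B * expR y.
Proof. exact: (@lim_seriesZ _ (exp_coeff y) B (is_cvg_series_exp_coeff y)). Qed.

Lemma cvg_normed_term t w B x : (forall y, `|w y| <= B) ->
  cvgn [normed series (term t w x)].
Proof.
move=> hw; have B0 : 0 <= B by exact: le_trans (normr_ge0 _) (hw 0).
apply: (@series_le_cvg _ _ (fun k => B * exp_coeff (4 * `|t|) k)).
- by move=> n; exact: normr_ge0.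
- by move=> n; rewrite mulr_ge0 // exp_coeff_ge0 // mulr_ge0.
- by move=> n; exact: term_bound.
exact: cvg_expc.
Qed.

Lemma cvg_term t w B x : (forall y, `|w y| <= B) -> cvgn (series (term t w x)).
Proof. by move=> hw; apply: normed_cvg; exact: (cvg_normed_term t w B x hw). Qed.

Lemma Ssemi_bound t w B x : (forall y, `|w y| <= B) ->
  `|Ssemi t w x| <= B * @expR R (4 * `|t|).
Proof.
move=> hw; have B0 : 0 <= B by exact: le_trans (normr_ge0 _) (hw 0).
rewrite SsemiE; apply: (le_trans (lim_series_norm (cvg_normed_term t w B x hw))).
rewrite -lim_expc; apply: lim_series_le.
- exact: (cvg_normed_term t w B x hw).
- exact: cvg_expc.
by move=> n; exact: term_bound.
Qed.


Local Open Scope classical_set_scope.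

Lemma cvg_sum_seq (I : Type) (s : seq I) (f : I -> nat -> R) (l : I -> R) :
  (forall i, f i n @[n --> \oo] --> l i) ->
  (\sum_(i <- s) f i n) @[n --> \oo] --> \sum_(i <- s) l i.
Proof.
move=> hf; elim: s => [|i s IH].
  rewrite big_nil; under eq_fun do rewrite big_nil; exact: cvg_cst.
rewrite big_cons; under eq_fun do rewrite big_cons; exact: cvgD.
Qed.

Lemma A_Ssemi M t w B : (forall y, `|w y| <= B) ->
  `|Asum M (Ssemi t w) - expR (2 * - t) * Asum M w| <= 2 * B * @expR R (4 * `|t|).
Proof.
move=> hw; have B0 : 0 <= B by exact: le_trans (normr_ge0 _) (hw 0).
pose Q n := \sum_(0 <= k < n) ((- t) ^+ k / (k`!)%:R * Asum M (iter k H w)).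
pose Rs n := series (exp_coeff (2 * - t)) n * Asum M w.
have QE n : Q n = Asum M (fun x => series (term t w x) n).
  rewrite /Q /Asum /series /=.
  under eq_bigr do rewrite mulr_sumr.
  rewrite exchange_big /=; apply: eq_bigr => j _; rewrite mulr_sumr.
  by apply: eq_bigr => k _; rewrite /term; ring.
have cQ : Q n @[n --> \oo] --> Asum M (Ssemi t w).
  under eq_fun do rewrite QE.
  rewrite /Asum; apply: cvg_sum_seq => j.
  apply: cvgM; first exact: cvg_cst.
  rewrite SsemiE; exact: (cvg_term t w B _ hw).
have cR : Rs n @[n --> \oo] --> expR (2 * - t) * Asum M w.
  apply: cvgM; last exact: cvg_cst.
  exact: is_cvg_series_exp_coeff.
have bd n : `|Q n - Rs n| <= 2 * B * expR (4 * `|t|).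
  have -> : Q n - Rs n = \sum_(0 <= k < n) ((- t) ^+ k / (k`!)%:R *
      (Asum M (iter k H w) - 2 ^+ k * Asum M w)).
    rewrite /Q /Rs /series /exp_coeff /= mulr_suml -sumrB.
    by apply: eq_bigr => k _; rewrite exprMn; ring.
  apply: (le_trans (ler_norm_sum _ _ _)).
  apply: (@le_trans _ _ (series (fun k => (2 * B) * exp_coeff (4 * `|t|) k) n)).
    rewrite /series /=; apply: ler_sum => k _.
    rewrite normrM normf_div normrX normrN normr_nat /exp_coeff /=.
    have -> : 2 * B * ((4 * `|t|) ^+ k / (k`!)%:R) =
       (`|t| ^+ k / (k`!)%:R) * (2 * 4 ^+ k * B) by rewrite exprMn; ring.
    apply: ler_wpM2l; first by rewrite divr_ge0 // exprn_ge0.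
    exact: Aiter.
  rewrite -lim_expc; apply: nondecreasing_cvgn_le; last exact: cvg_expc.
  apply: nondecreasing_series => k _ _.
  by rewrite mulr_ge0 ?mulr_ge0 // exp_coeff_ge0 // mulr_ge0.
have cD : `|Q n - Rs n| @[n --> \oo] -->
    `|Asum M (Ssemi t w) - expR (2 * - t) * Asum M w|.
  by apply: cvg_norm; apply: cvgB.
rewrite -(cvg_lim (@Rhausdorff R) cD).
apply: limr_le; first by apply/cvg_ex; eexists; exact: cD.
by apply: nearW => n; exact: bd.
Qed.


Definition wseq (N : nat) : seq int :=
  [seq Posz n | n <- iota 0 N] ++ [seq Negz n | n <- iota 0 N].

Lemma wseq_uniq N : uniq (wseq N).
Proof.
rewrite /wseq cat_uniq !map_inj_uniq ?iota_uniq /=; last 2 first.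
- by move=> a b [].
- by move=> a b [].
rewrite andbT; apply/hasPn => x /mapP[n _ ->]; apply/negP => /mapP[m _] //.
Qed.

Definition Wr (v : int -> R) (N : nat) : R :=
  \sum_(0 <= n < N) (v (Posz n) ^+ 2 + v (Negz n) ^+ 2).

Lemma Wr_seq (v : int -> R) N :
  \sum_(x <- wseq N) ((v x) ^+ 2)%:E = ((Wr v N)%:E)%E.
Proof.
rewrite /wseq big_cat !big_map /Wr -sumEFin.
under [RHS]eq_bigr do rewrite EFinD.
by rewrite big_split /= /index_iota subn0.
Qed.

Lemma Wr_le (v : int -> R) N : ((Wr v N)%:E <= l2sq v)%E.
Proof.
rewrite -Wr_seq fsbig_seq ?wseq_uniq // /l2sq; apply: esum_ge.
exists [set` wseq N] => //; split => //; exact: finite_seq.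
Qed.

Lemma l2sq_le_sup (v : int -> R) :
  (l2sq v <= ereal_sup (range (fun N => (Wr v N)%:E)))%E.
Proof.
rewrite /l2sq /esum; apply: ub_ereal_sup => _ [A [finA _] <-].
have [s ->] := (finite_seqP A).1 finA.
pose N := (\max_(x <- s) absz x).+1.
apply: (@le_trans _ _ ((Wr v N)%:E)); last by apply: ereal_sup_ubound; exists N.
rewrite -Wr_seq (@fsbig_seq _ _ _ _ (wseq N)) ?wseq_uniq //.
apply: lee_fsum_nneg_subset; [exact: finite_seq | exact: finite_seq | | ].
- move=> x; rewrite !mem_setE => xs.
  have hx := @leq_bigmax_seq _ s xpredT (fun y => absz y) x xs isT.
  case: x xs hx => n xs hx; rewrite /wseq mem_cat; apply/orP.
    by left; apply/mapP; exists n => //; rewrite mem_iota /= add0n /N ltnS.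
  by right; apply/mapP; exists n => //; rewrite mem_iota /= add0n /N ltnS ltnW.
- by move=> x _; rewrite lee_fin sqr_ge0.
Qed.

Lemma l2sq_sup (v : int -> R) :
  l2sq v = ereal_sup (range (fun N => (Wr v N)%:E)).
Proof.
apply/le_anti/andP; split; first exact: l2sq_le_sup.
by apply: ub_ereal_sup => _ [N _ <-]; exact: Wr_le.
Qed.

Lemma Wr_nondecr (v : int -> R) :
  {homo (fun N => (Wr v N)%:E) : n m / (n <= m)%N >-> (n <= m)%E}.
Proof.
move=> n m nm; rewrite lee_fin /Wr.
apply: (nondecreasing_series (u_ := fun k => v (Posz k) ^+ 2 + v (Negz k) ^+ 2)) => //.
by move=> k _ _; rewrite addr_ge0 // sqr_ge0.
Qed.

Lemma Wr_cvg (v : int -> R) : (Wr v N)%:E @[N --> \oo] --> l2sq v.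
Proof. by rewrite l2sq_sup; apply: ereal_nondecreasing_cvgn; exact: Wr_nondecr. Qed.

Lemma l2sq_ge0 (v : int -> R) : (0 <= l2sq v)%E.
Proof. by apply: esum_ge0 => x _; rewrite lee_fin sqr_ge0. Qed.

Lemma sq_le_l2sq (v : int -> R) y : ((v y ^+ 2)%:E <= l2sq v)%E.
Proof.
rewrite /l2sq; apply: esum_ge; exists [set y]; first by split => //; exact: finite_set1.
by rewrite fsbig_set1.
Qed.

Lemma pt_le_l2norm (v : int -> R) y : l2_in v -> `|v y| <= l2norm v.
Proof.
move=> hv; have hf : l2sq v \is a fin_num by rewrite ge0_fin_numE // l2sq_ge0.
rewrite /l2norm -sqrtr_sqr ler_sqrt; last by rewrite fine_ge0 // l2sq_ge0.
by rewrite -lee_fin fineK // sq_le_l2sq.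
Qed.

End P1.
Arguments term {R}.
Arguments cvg_term {R}.
Arguments pt_le_l2norm {R}.
Arguments Wr {R}.
Arguments Wr_cvg {R}.
Arguments l2sq_ge0 {R}.
Arguments Asum {R}.
Arguments A_Ssemi {R}.
Arguments Ssemi_bound {R}.
Arguments Wr_le {R}.
Arguments l2sq_sup {R}.
Arguments sq_le_l2sq {R}.

Local Open Scope classical_set_scope.

Local Open Scope classical_set_scope.

Section P2.
Variable R : realType.
Local Notation mu := (@lebesgue_measure R).

Lemma mI0T (T : R) : measurable (I0T T).
Proof. exact: measurable_itv. Qed.

Lemma muI0T (T : R) : 0 < T -> mu (I0T T) = T%:E.
Proof. by move=> T0; rewrite /I0T lebesgue_measure_itv /= lte_fin T0 sube0. Qed.

Lemma mul_eq_le (E m t : \bar R) : m = t -> (E * m <= t * E)%E.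
Proof. by move=> ->; rewrite muleC. Qed.

Lemma kappa (T : R) (r : \bar R) : 0 < T -> (1 <= r)%E -> exists k : R, 0 <= k /\
  forall h : R -> R, (forall t, 0 <= h t) -> measurable_fun (I0T T) h ->
  (\int[mu]_(t in I0T T) (h t)%:E <=
     k%:E * Lnorm mu r (fun t => (if t \in I0T T then h t else 0)%:E))%E.
Proof.
move=> T0 r1.
have H0 h : (forall t, 0 <= h t) ->
    (\int[mu]_(t in I0T T) (h t)%:E = \int[mu]_x (`|(h \_ (I0T T)) x|)%:E)%E.
  move=> h0; rewrite integral_mkcond; apply: eq_integral => x _.
  by rewrite /patch; case: ifP => _; rewrite ?normr0 // ger0_norm.
move: r r1 => [p| |] //; last first.
  move=> _; exists T; split; first exact: ltW.
  move=> h h0 mh; rewrite unlock /=.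
  have mT : (0 < mu [set: R])%E.
    apply: (@lt_le_trans _ _ (mu (I0T T))); first by rewrite muI0T // lte_fin.
    by apply: le_measure => //; rewrite inE //; exact: mI0T.
  rewrite mT.
  set E := ess_sup_inf.ess_sup _ _.
  have E0 : (0 <= E)%E by apply: ess_sup_inf.ess_sup_gee => //; apply: nearW => x; exact: abse_ge0.
  apply: (@le_trans _ _ (\int[mu]_(t in I0T T) (cst E t))%E); last first.
    rewrite integral_cst; last exact: mI0T.
    set m := (X in (_ * X <= _)%E).
    have -> : m = T%:E by rewrite /m; exact: muI0T.
    by rewrite muleC.
  apply: ae_ge0_le_integral.
  - exact: mI0T.
  - by move=> t _; rewrite lee_fin.
  - by apply/measurable_EFinP.
  - by move=> t _.
  - exact: measurable_cst.
  - have := ess_sup_inf.ess_sup_ge mu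
      (abse \o (fun t => (if t \in I0T T then h t else 0)%:E)).
    apply: filterS => x /= hx Dx.
    by move: hx; rewrite (mem_set Dx) ger0_norm.
rewrite lee_fin => p1.
have [->|pn1] := eqVneq p 1.
  exists 1; split => // h h0 mh; rewrite mul1e Lnorm1 H0 //.
have p1' : 1 < p by rewrite lt_neqAle eq_sym pn1.
have p0 : 0 < p by lra.
pose q := p / (p - 1).
have q0 : 0 < q by rewrite /q divr_gt0 //; lra.
have pq : p^-1 + q^-1 = 1 by rewrite /q invf_div; field; lra.
exists (T `^ q^-1); split; first exact: powR_ge0.
move=> h h0 mh.
have mhb := (@measurable_restrictT _ _ _ _ (I0T T) h (mI0T T)).1 mh.
pose g := \1_(I0T T) : R -> R.
have mg := (@measurable_indicP _ _ R (I0T T)).1 (mI0T T).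
have := hoelder mu mhb mg p0 q0 pq.
have -> : Lnorm mu 1 (EFin \o (h \_ (I0T T) \* g)%R) =
    (\int[mu]_(t in I0T T) (h t)%:E)%E.
  rewrite Lnorm1 H0 //; apply: eq_integral => x _ /=.
  by rewrite /g /patch indicE; case: ifP => _; rewrite ?mulr1 ?mulr0.
have -> : Lnorm mu q%:E (EFin \o g) = (T `^ q^-1)%:E.
  rewrite unlock.
  have -> : (\int[mu]_x (`|(EFin \o g) x| `^ q)%E = T%:E)%E.
    rewrite -muI0T // -(setIT (I0T T)) -integral_indic //; last exact: mI0T.
    apply: eq_integral => x _ /=; rewrite /g indicE.
    case: (x \in I0T T); rewrite /= ?normr1 ?normr0 ?powR1 ?powR0 //.
    by rewrite gt_eqF.
  by rewrite poweR_EFin.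
by rewrite muleC.
Qed.

End P2.

Local Open Scope classical_set_scope.

Section P3.
Variable R : realType.
Local Notation mu := (@lebesgue_measure R).
Local Notation H := (@Hlap R).
Variables (T : R) (u : R -> int -> R).
Hypothesis hmu : forall x, measurable_fun (I0T T) (fun tau => u tau x).
Hypothesis hl2 : forall tau, I0T T tau -> l2_in (extD (u tau)).

Lemma m_iter k x : measurable_fun (I0T T) (fun tau => iter k H (extD (u tau)) x).
Proof.
elim: k x => [|k IH] x /=.
  rewrite /extD; case: (inD x); [exact: hmu | exact: measurable_cst].
rewrite /Hlap; apply: measurable_funD; apply: measurable_funB; exact: IH.
Qed.

Lemma m_coef k : measurable_fun (I0T T) (fun tau : R => (- (T - tau)) ^+ k / (k`!)%:R).
Proof.
apply: measurable_funM; last exact: measurable_cst.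
apply: measurable_funX.
apply: (measurableT_comp (@oppr_measurable R setT)).
apply: measurable_funB; [exact: measurable_cst | exact: measurable_id].
Qed.

Lemma m_term k x : measurable_fun (I0T T) (fun tau => term (T - tau) (extD (u tau)) x k).
Proof. rewrite /term; apply: measurable_funM; [exact: m_coef | exact: m_iter]. Qed.

Lemma m_F x : measurable_fun (I0T T) (fun tau => Ssemi (T - tau) (extD (u tau)) x).
Proof.
eapply (@measurable_fun_cvg _ _ _ _ (fun n (tau : R) => series (term (T - tau) (extD (u tau)) x) n)).
- by move=> n; rewrite /series /=; apply: measurable_sum => k; exact: m_term.
- move=> tau Dt; rewrite SsemiE.
  have c := cvg_term (T - tau) (extD (u tau)) _ x (fun y => pt_le_l2norm _ y (hl2 tau Dt)).
  exact: c.
Qed.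

Lemma m_Wr N : measurable_fun (I0T T) (fun tau => Wr (extD (u tau)) N).
Proof.
rewrite /Wr; apply: measurable_sum => n; apply: measurable_funD;
  apply: measurable_funX; exact: (m_iter 0).
Qed.

Lemma m_B : measurable_fun (I0T T) (fun tau => l2norm (extD (u tau))).
Proof.
rewrite /l2norm.
apply: (measurableT_comp (continuous_measurable_fun (@sqrt_continuous R))).
eapply (@measurable_fun_cvg _ _ _ _ (fun N (tau : R) => Wr (extD (u tau)) N)); first exact: m_Wr.
move=> tau Dt.
have fin : l2sq (extD (u tau)) \is a fin_num by rewrite ge0_fin_numE ?l2sq_ge0 //; exact: hl2.
have := Wr_cvg (extD (u tau)); rewrite -(fineK fin) => /fine_cvg; exact.
Qed.

End P3.

Local Open Scope classical_set_scope.

Section P4.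
Variable R : realType.
Local Notation mu := (@lebesgue_measure R).

Definition f0 (M : nat) (x : int) : R :=
  match x with
  | Posz n => if odd n && (n < M.*2)%N then (-1) ^+ n./2 else 0
  | Negz _ => 0
  end.

Lemma f0_bound M y : `|f0 M y| <= 1.
Proof.
case: y => n /=; last by rewrite normr0.
by case: ifP => _; rewrite ?normr0 // normrX normrN1 expr1n.
Qed.

Lemma A_f0 M : Asum M (f0 M) = M%:R.
Proof.
rewrite /Asum (eq_bigr (fun=> 1)); first by rewrite sumr_const card_ord.
move=> k _ /=; have kM := ltn_ord k.
have -> : (k.*2.+1 < M.*2)%N by lia.
by rewrite odd_double /= uphalf_double -exprMn mulrNN mulr1 expr1n.
Qed.

Lemma sum_lt_le (c N : nat) : \sum_(0 <= n < N) (((n < c)%N)%:R : R) <= c%:R.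
Proof.
have -> : \sum_(0 <= n < N) (((n < c)%N)%:R : R) = (minn N c)%:R.
  elim: N => [|N IH]; first by rewrite big_mkord big_ord0 min0n.
  rewrite big_nat_recr //= IH -natrD; congr (_%:R).
  case: (ltnP N c) => h /=; lia.
by rewrite ler_nat geq_minr.
Qed.

Lemma Wr_f0 M N : Wr (f0 M) N <= (M.*2)%:R.
Proof.
apply: le_trans (sum_lt_le (M.*2) N); rewrite /Wr; apply: ler_sum => n _ /=.
rewrite expr0n /= addr0.
case: ifP => [/andP[_ ->]|_]; last by rewrite expr0n /= ler0n.
by rewrite -exprM mulnC exprM sqrrN expr1n expr1n.
Qed.

Lemma l2sq_f0 M : (l2sq (f0 M) <= ((M.*2)%:R)%:E)%E.
Proof.
rewrite l2sq_sup; apply: ub_ereal_sup => _ [N _ <-]; rewrite lee_fin; exact: Wr_f0.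
Qed.

Lemma Rint_Asum M (D : set R) (mD : measurable D) (F : int -> R -> R) :
  (forall x, mu.-integrable D (EFin \o F x)) ->
  mu.-integrable D (EFin \o (fun t => Asum M (fun x => F x t))) /\
  Rintegral mu D (fun t => Asum M (fun x => F x t)) =
    Asum M (fun x => Rintegral mu D (F x)).
Proof.
move=> iF; elim: M => [|M [IHi IHe]].
  split.
    apply: (eq_integrable _ (cst 0%E)).
    - exact: mD.
    - by move=> t _ /=; rewrite /Asum big_ord0.
    - exact: integrable0.
  rewrite /Asum big_ord0 /Rintegral.
  under eq_integral do rewrite big_ord0.
  by rewrite integral0.
have -> : (fun t => Asum M.+1 (fun x => F x t)) =
    (fun t => Asum M (fun x => F x t) + (-1) ^+ M * F (Posz M.*2.+1) t).
  by apply: funext => t; rewrite /Asum big_ord_recr.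
have i2 : mu.-integrable D (EFin \o (fun t => (-1) ^+ M * F (Posz M.*2.+1) t)).
  apply: (@eq_integrable _ _ _ mu D _ (fun t => ((-1) ^+ M)%:E * (F (Posz M.*2.+1) t)%:E)%E).
  - exact: mD.
  - by move=> t _ /=; rewrite EFinM.
  - by apply: integrableZl; [exact: mD | exact: iF].
split.
  apply: (@eq_integrable _ _ _ mu D _ ((EFin \o (fun t => Asum M (fun x => F x t))) \+
     (EFin \o (fun t => ((-1) ^+ M * F (Posz M.*2.+1) t)%R)))%E).
  - exact: mD.
  - by move=> t _ /=; rewrite EFinD.
  - by apply: integrableD => //; exact: mD.
rewrite RintegralD // RintegralZl // IHe.
by rewrite /Asum big_ord_recr.
Qed.

End P4.

Local Open Scope classical_set_scope.

Theorem mainTheorem4 (R : realType) (T : R) (r : \bar R) (K : R) :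
  0 < T -> (1 <= r)%E -> 0 <= K -> ~ controllable 0 T r K.
Proof.
move=> T0 r1 K0 hc.
have [k [k0 hk]] := @kappa R T r T0 r1.
pose E := @expR R (4 * T).
pose e := @expR R (2 * - T).
have E0 : 0 < E := expR_gt0 _.
have e0 : 0 < e := expR_gt0 _.
pose C := 2 * E + 4 * E * k * K.
pose n := (Num.trunc (C / (2 * e))).+1.
have hn : C / (2 * e) < n%:R by exact: truncnS_gt.
have n1 : 1 <= n%:R :> R by rewrite ler1n.
pose M := (n ^ 2).*2.
have MR : M%:R = 2 * n%:R ^+ 2 :> R by rewrite /M -mul2n natrM natrX.
have fin0 : l2sq (f0 R M) \is a fin_num.
  by rewrite ge0_fin_numE ?l2sq_ge0 // (le_lt_trans (l2sq_f0 R M)) // ltry.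
have l2f : l2_in (f0 R M) by rewrite /l2_in -ge0_fin_numE ?l2sq_ge0.
have nf : l2norm (f0 R M) <= 2 * n%:R.
  have h1 : fine (l2sq (f0 R M)) <= (2 * n%:R) ^+ 2.
    rewrite -lee_fin fineK // (le_trans (l2sq_f0 R M)) // lee_fin.
    have -> : ((M.*2)%:R : R) = (2 * n%:R) ^+ 2 by rewrite -mul2n natrM MR; ring.
    by [].
  have n2 : 0 <= 2 * n%:R :> R by lra.
  by rewrite /l2norm -(ger0_norm n2) -sqrtr_sqr ler_sqrt // sqr_ge0.
have [v [[hmu [hl2 hL]] [hmild hz]]] := hc (f0 R M) l2f.
have mild0 : forall x, mild T (f0 R M) v x = 0.
  move: hz; rewrite mul0r => hz.
  have finm : l2sq (mild T (f0 R M) v) \is a fin_num by rewrite ge0_fin_numE ?l2sq_ge0.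
  have : fine (l2sq (mild T (f0 R M) v)) <= 0.
    by rewrite -sqrtr_eq0; apply/eqP/le_anti; rewrite hz sqrtr_ge0.
  move=> hf x; apply/eqP; rewrite -sqrf_eq0 eq_le sqr_ge0 andbT -lee_fin.
  apply: (le_trans (sq_le_l2sq _ x)); rewrite -(fineK finm) lee_fin //.
pose B t := l2norm (extD (v t)).
pose F x t := Ssemi (T - t) (extD (v t)) x.
have B0 : forall t, 0 <= B t by move=> t; exact: sqrtr_ge0.
have mB := @m_B R T v hmu hl2.
have intB : (\int[lebesgue_measure]_(t in I0T T) (B t)%:E <=
             (k * (K * l2norm (f0 R M)))%:E)%E.
  apply: (le_trans (hk B B0 mB)); rewrite EFinM.
  by apply: lee_wpmul2l; [rewrite lee_fin | exact: hL].
have iB : lebesgue_measure.-integrable (I0T T) (EFin \o B).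
  apply/integrableP; split; first exact/measurable_EFinP.
  apply: (le_lt_trans _ (le_lt_trans intB (ltry _))).
  apply: ge0_le_integral.
  - exact: mI0T.
  - by move=> t _; exact: abse_ge0.
  - by apply: measurableT_comp => //; exact/measurable_EFinP.
  - exact/measurable_EFinP.
  - by move=> t _ /=; rewrite ger0_norm.
have tI t : I0T T t -> `|T - t| <= T.
  rewrite /I0T /= in_itv /= => /andP[t0 tT]; rewrite ger0_norm; lra.
have iF : forall x, lebesgue_measure.-integrable (I0T T) (EFin \o F x).
  move=> x.
  have ig : lebesgue_measure.-integrable (I0T T) (fun t => E%:E * (EFin \o B) t)%E.
    by apply: integrableZl => //; exact: mI0T.
  apply: le_integrable ig.
  - exact: mI0T.
  - apply/measurable_EFinP; exact: (@m_F R T v hmu hl2 x).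
  - move=> t Dt /=; rewrite lee_fin.
    rewrite (ger0_norm (mulr_ge0 (ltW E0) (B0 t))).
    apply: (le_trans (Ssemi_bound _ _ _ _ (fun y => pt_le_l2norm _ y (hl2 t Dt)))).
    rewrite mulrC; apply: ler_wpM2r; first exact: B0.
    by rewrite ler_expR; apply: ler_wpM2l => //; exact: tI.
have [iG eqG] := @Rint_Asum R M (I0T T) (@mI0T R T) F iF.
pose G t := Asum M (fun x => F x t).
have Aw0 t : Asum M (extD (v t)) = 0.
  rewrite /Asum big1 // => j _; rewrite /extD /inD dvdzE /= dvdn2 /= odd_double /=.
  by rewrite mulr0.
have Gb t : I0T T t -> `|G t| <= 2 * E * B t.
  move=> Dt.
  have := A_Ssemi M (T - t) (extD (v t)) (B t) (fun y => pt_le_l2norm _ y (hl2 t Dt)).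
  rewrite Aw0 mulr0 subr0 => h; apply: (le_trans h).
  have : expR (4 * `|T - t|) <= E by rewrite ler_expR; apply: ler_wpM2l => //; exact: tI.
  have := B0 t; nra.
have mG : measurable_fun (I0T T) G.
  by apply/measurable_EFinP; case/integrableP: iG.
have i2 : lebesgue_measure.-integrable (I0T T) (EFin \o (fun t => 2 * E * B t)).
  have ig : lebesgue_measure.-integrable (I0T T)
      (fun t => (2 * E)%:E * (EFin \o B) t)%E.
    by apply: integrableZl => //; exact: mI0T.
  apply: (@eq_integrable _ _ _ lebesgue_measure (I0T T) _ _ _ _ ig).
  - exact: mI0T.
  - by move=> t _ /=; rewrite EFinM.
have iGa : lebesgue_measure.-integrable (I0T T) (EFin \o (fun t => `|G t|)).
  apply: le_integrable i2.
  - exact: mI0T.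
  - apply/measurable_EFinP; exact: (measurableT_comp (@normr_measurable R setT) mG).
  - move=> t Dt /=; rewrite lee_fin normr_id (ger0_norm (mulr_ge0 (mulr_ge0 _ (ltW E0)) (B0 t))) //.
    exact: Gb.
have RB : Rintegral lebesgue_measure (I0T T) B <= k * (K * l2norm (f0 R M)).
  rewrite -lee_fin /Rintegral fineK //.
  by apply: integrable_fin_num => //; exact: mI0T.
have hI : `|Rintegral lebesgue_measure (I0T T) G| <= 2 * E * (k * (K * l2norm (f0 R M))).
  apply: (le_trans (le_normr_Rintegral _ iG)); first exact: mI0T.
  apply: (le_trans (le_Rintegral _ iGa i2 _)); first exact: mI0T.
    by move=> t Dt; exact: Gb.
  rewrite RintegralZl //; last exact: mI0T.
  by apply: ler_wpM2l => //; rewrite mulr_ge0 // ltW.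
have hS := A_Ssemi M T (f0 R M) 1 (f0_bound R M).
rewrite A_f0 (ger0_norm (ltW T0)) -/e -/E in hS.
have h0 : Asum M (mild T (f0 R M) v) = 0.
  by rewrite /Asum big1 // => j _; rewrite mild0 mulr0.
have hE : Asum M (mild T (f0 R M) v) =
    Asum M (Ssemi T (f0 R M)) + Rintegral lebesgue_measure (I0T T) G.
  rewrite eqG /Asum -big_split /=; apply: eq_bigr => j _; rewrite -mulrDr.
  by [].
have hl0 : k * (K * l2norm (f0 R M)) <= k * (K * (2 * n%:R)).
  by apply: ler_wpM2l => //; apply: ler_wpM2l.
have hn' : C < 2 * e * n%:R by rewrite -ltr_pdivrMl ?mulr_gt0 // mulrC.
move: hS hI; rewrite !ler_norml => /andP[hS1 hS2] /andP[hI1 hI2].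
rewrite MR in hS1 hS2.
move: hn'; rewrite /C => hn'.
have hk0 : 0 <= k * K by rewrite mulr_ge0.
set A := Asum M (Ssemi T (f0 R M)) in hE hS1 hS2.
set I := Rintegral _ _ _ in hE hI1 hI2.
set N := n%:R in n1 hl0 hn' hS1 hS2.
set L := l2norm (f0 R M) in hl0 hI1 hI2.
have hA : A + I = 0 by rewrite -hE.
have h3 : 2 * E * (k * (K * L)) <= 2 * E * (k * (K * (2 * N))).
  by apply: ler_wpM2l => //; rewrite mulr_ge0 // ltW.
have key : e * (2 * N ^+ 2) <= 2 * 1 * E + 2 * E * (k * (K * (2 * N))) by lra.
nra.
Qed.
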